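(* Let $S$ be a $k$-dimensional subspace of $\mathbb{R}^n$ with orthogonal projection $P_S$, let $B$ be a real symmetric $n\times n$ matrix, $l\in\mathbb{R}$, $\delta_L>0$, $t>0$, and $Y=vv^T$ with $v\in\mathbb{R}^n$. Suppose $\lambda_{\min}(B|_S)>l+\delta_L$. Define $$L_B=\frac{\bigl(P_S(B-(l+\delta_L)I)P_S\bigr)^{\dagger 2}}{\Phi_{l+\delta_L}(B)-\Phi_l(B)}-\bigl(P_S(B-(l+\delta_L)I)P_S\bigr)^{\dagger}.$$ If $L_B\bullet Y\ge 1/t$, then $\Phi_{l+\delta_L}(B+tY)\le\Phi_l(B)$ and $\lambda_{\min}((B+tY)|_S)>l+\delta_L$.
   Context: $B|_S$ denotes the restriction (compression) of $B$ to $S$, i.e. the $k\times k$ matrix of the quadratic form $x\mapsto x^TBx$ on $S$ in an orthonormal basis of $S$; its eigenvalues are $\lambda_1(B|_S)\le\dots\le\lambda_k(B|_S)$. For $l<\lambda_{\min}(B|_S)$, the lower potential is $\Phi_l(B)=\operatorname{Tr}\bigl((P_S(B-lI)P_S)^\dagger\bigr)=\sum_{i=1}^k\frac{1}{\lambda_i(B|_S)-l}$. $A^\dagger$ is the Moore–Penrose pseudoinverse, $A^{\dagger2}=(A^\dagger)^2$, and $C\bullet D=\operatorname{Tr}(C^TD)$. *)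

(* Defs.v *)
From HB Require Import structures.
From mathcomp Require Import all_boot all_order all_algebra.
From mathcomp Require Import polyrcf.
Set Implicit Arguments. Unset Strict Implicit. Unset Printing Implicit Defensive.
Import Order.TTheory GRing.Theory Num.Theory.
Local Open Scope ring_scope.

Section Defs.
Variable R : rcfType.

(* Moore--Penrose pseudoinverse, via the full-rank factorisation
   A = C F with C := col_base A (full column rank), F := row_base A
   (full row rank):  A^+ = F^T (F F^T)^-1 (C^T C)^-1 C^T. *)
Definition pinv m n (A : 'M[R]_(m, n)) : 'M[R]_(n, m) :=
  let C := col_base A in let F := row_base A in
  (F^T *m invmx (F *m F^T)) *m (invmx (C^T *m C) *m C^T).

Definition frobdot m n (C D : 'M[R]_(m, n)) : R := \tr (C^T *m D).

(* The subspace S of R^n (dimension k) is given by a k x n matrix U whose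
   rows form an orthonormal basis of S (U U^T = I_k).  Then P_S = U^T U. *)
Definition projS k n (U : 'M[R]_(k, n)) : 'M[R]_n := U^T *m U.

(* Compression B|_S : the matrix of x |-> x^T B x on S in the basis U. *)
Definition restr k n (U : 'M[R]_(k, n)) (B : 'M[R]_n) : 'M[R]_k :=
  U *m B *m U^T.

(* smallest eigenvalue: the least (real) root of the characteristic
   polynomial (rootsR lists the real roots in increasing order). *)
Definition lambda_min k (M : 'M[R]_k) : R := head 0 (rootsR (char_poly M)).

Definition shiftS k n (U : 'M[R]_(k, n)) (B : 'M[R]_n) (l : R) : 'M[R]_n :=
  projS U *m (B - l%:M) *m projS U.

Definition Phi k n (U : 'M[R]_(k, n)) (B : 'M[R]_n) (l : R) : R :=
  \tr (pinv (shiftS U B l)).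

Definition LB k n (U : 'M[R]_(k, n)) (B : 'M[R]_n) (l dL : R) : 'M[R]_n :=
  let X := pinv (shiftS U B (l + dL)) in
  (Phi U B (l + dL) - Phi U B l)^-1 *: (X *m X) - X.

End Defs.

(* Main.v *)
Require Import Defs.
From HB Require Import structures.
From mathcomp Require Import all_boot all_order all_algebra.
From mathcomp Require Import polyrcf complex.
Import Order.TTheory GRing.Theory Num.Theory.
Set Implicit Arguments. Unset Strict Implicit. Unset Printing Implicit Defensive.
Local Open Scope ring_scope.

Section Spec.
Variable R : rcfType.
Local Notation toC := (real_complex R).
Variable k : nat.
Variable M : 'M[R]_k.
Hypothesis Msym : M^T = M.
Local Notation M' := (map_mx toC M).

Lemma M'herm : M' \is hermsymmx.
Proof.
apply: realsym_hermsym.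
  apply/is_hermitianmxP; rewrite expr0 scale1r; apply/matrixP => i j.
  by rewrite !mxE -[M in LHS]Msym mxE.
by apply/mxOverP => i j; rewrite mxE; apply/complex_realP; eexists.
Qed.

Let P := spectralmx M'.
Let d := spectral_diag M'.

Lemma M'E : M' = invmx P *m diag_mx d *m P.
Proof. by apply/orthomx_spectralP/hermitian_normalmx/M'herm. Qed.

Lemma d_real i : toC (complex.Re (d 0 i)) = d 0 i.
Proof.
have /mxOverP := hermitian_spectral_diag_real M'herm.
by move=> /(_ 0 i) /RRe_real.
Qed.

Lemma d_eig i : root (char_poly M') (d 0 i).
Proof.
rewrite -eigenvalue_root_char.
apply/eigenvalueP; exists (row i P).
  rewrite {1}M'E !mulmxA -row_mul mulmxV ?spectral_unit // row1.
  by rewrite -rowE row_diag_mx -scalemxAl -rowE.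
rewrite rowE mulmx_free_eq0 ?row_free_unit ?spectral_unit //.
apply/eqP => /matrixP /(_ 0 i); rewrite !mxE !eqxx /= => /eqP.
by rewrite oner_eq0.
Qed.

Lemma d_root i : root (char_poly M) (complex.Re (d 0 i)).
Proof.
have := d_eig i; rewrite -map_char_poly -[X in root _ X]d_real.
rewrite /root horner_map /= => /eqP H; apply/eqP.
by apply: complexI; rewrite H.
Qed.

Lemma xreal (x : 'rV[R]_k) : map_mx Num.conj (map_mx toC x) = map_mx toC x.
Proof.
apply/matrixP => i j; rewrite !mxE conj_Creal //.
by apply/complex_realP; eexists.
Qed.

Lemma spec_pd (l : R) : (forall r, root (char_poly M) r -> l < r) ->
  forall x : 'rV[R]_k, x != 0 -> 0 < (x *m (M - l%:M) *m x^T) 0 0.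
Proof.
move=> hr x x0.
pose e := \row_j (d 0 j - toC l).
have Ee : M' - (toC l)%:M = invmx P *m diag_mx e *m P.
  have -> : diag_mx e = diag_mx d - (toC l)%:M.
    apply/matrixP => i j; rewrite !mxE; case: eqP => [->|_] //=.
    by rewrite !mulr0n subr0.
  rewrite mulmxBr mulmxBl -M'E mul_mx_scalar -scalemxAl mulVmx ?spectral_unit //.
  by rewrite scalemx1.
have ep : forall j, 0 < e 0 j.
  move=> j; rewrite !mxE -d_real -rmorphB /= -(rmorph0 toC) ltcR subr_gt0.
  exact/hr/d_root.
pose x' := map_mx toC x.
have key : toC ((x *m (M - l%:M) *m x^T) 0 0)
    = (x' *m (M' - (toC l)%:M) *m x'^T) 0 0.
  transitivity ((map_mx toC (x *m (M - l%:M) *m x^T)) 0 0); first by rewrite [in RHS]mxE.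
  by rewrite map_mxM map_mxM map_trmx map_mxB map_scalar_mx.
pose y := x' *m invmx P.
have Py : P *m x'^T = (map_mx Num.conj y)^T.
  rewrite /y map_mxM xreal invmx_unitary ?spectral_unitarymx //.
  rewrite -map_mx_comp map_mx_id; last by move=> z /=; rewrite conjCK.
  by rewrite trmx_mul trmxK.
have y0 : y != 0.
  rewrite /y mulmx_free_eq0 ?row_free_unit ?unitmx_inv ?spectral_unit //.
  by rewrite map_mx_eq0.
rewrite -(ltcR) rmorph0 key Ee !mulmxA -/y -mulmxA Py.
rewrite mxE.
have -> : \sum_j (y *m diag_mx e) 0 j * (map_mx Num.conj y)^T j 0 =
   \sum_j e 0 j * (y 0 j * (y 0 j)^*).
  by apply: eq_bigr => j _; rewrite mul_mx_diag !mxE mulrAC mulrC mulrA.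
have [j yj] : exists j, y 0 j != 0.
  apply/existsP; move: y0; apply: contraR; rewrite negb_exists => /forallP H.
  apply/eqP; apply/rowP => b; rewrite [RHS]mxE; apply/eqP; exact: (negPn (H b)).
rewrite (bigD1 j) //= ltr_wpDr //.
  by apply: sumr_ge0 => i _; rewrite mulr_ge0 ?mul_conjC_ge0 // ltW.
by rewrite mulr_gt0 // mul_conjC_gt0.
Qed.

End Spec.

Section Real.
Variable R : rcfType.

Lemma sqsum_ge0 k (x : 'rV[R]_k) : 0 <= (x *m x^T) 0 0.
Proof.
rewrite mxE; apply: sumr_ge0 => j _; rewrite mxE -expr2; exact: sqr_ge0.
Qed.

Lemma sqsum_gt0 k (x : 'rV[R]_k) : x != 0 -> 0 < (x *m x^T) 0 0.
Proof.
move=> x0; rewrite lt_def sqsum_ge0 andbT.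
apply: contra x0; rewrite mxE => /eqP H.
have H2 : forall j, x 0 j ^+ 2 = 0.
  move=> j; apply/eqP; move/eqP: H; rewrite psumr_eq0 => [/allP Hall|]; last first.
    by move=> i _; rewrite mxE -expr2 sqr_ge0.
  by have := Hall j (mem_index_enum _); rewrite /= mxE -expr2.
apply/eqP/rowP => j; rewrite mxE; apply/eqP; rewrite -sqrf_eq0; exact/eqP/H2.
Qed.

Lemma gram_unit m n (W : 'M[R]_(m, n)) : row_free W -> W *m W^T \in unitmx.
Proof.
move=> Wf; rewrite -row_free_unit; apply: inj_row_free => y H.
have : (y *m W) *m (y *m W)^T = 0 by rewrite trmx_mul !mulmxA -(mulmxA y) H mul0mx.
move=> H0; apply/eqP; rewrite -(mulmx_free_eq0 _ Wf); apply/negPn/negP => Hn.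
by have := sqsum_gt0 Hn; rewrite H0 mxE ltxx.
Qed.

Lemma pinv_compress k n (U : 'M[R]_(k, n)) (C : 'M[R]_k) :
  U *m U^T = 1%:M -> C \in unitmx ->
  pinv (U^T *m C *m U) = U^T *m invmx C *m U.
Proof.
move=> UU Cu; set A := U^T *m C *m U; rewrite /pinv.
set F := row_base A; set Cb := col_base A.
have Ffree : row_free F by exact: row_base_free.
have [X FX] : exists X, F = X *m U.
  by apply/submxP; rewrite /F eq_row_base /A submxMl.
have [Fri FFri] : exists Fri, F *m Fri = 1%:M by apply/row_freeP.
have [Z CbE] : exists Z, Cb = U^T *m Z.
  exists (C *m U *m Fri).
  by rewrite -[Cb]mulmx1 -FFri mulmxA mulmx_base /A !mulmxA.
have ZX : Z *m X = C.
  have : U *m A *m U^T = C by rewrite /A !mulmxA UU mul1mx -(mulmxA C) UU mulmx1.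
  by rewrite -[A in U *m A]mulmx_base -/Cb -/F CbE FX !mulmxA UU mul1mx -!mulmxA UU mulmx1.
have CbT : Cb^T *m Cb = Z^T *m Z.
  by rewrite CbE trmx_mul trmxK mulmxA -(mulmxA _ U) UU mulmx1.
have FFT : F *m F^T = X *m X^T.
  by rewrite FX trmx_mul mulmxA -(mulmxA X) UU mulmx1.
have u1 : X *m X^T \in unitmx by rewrite -FFT gram_unit.
have u2 : Z^T *m Z \in unitmx.
  rewrite -CbT -{2}[Cb]trmxK gram_unit // /row_free mxrank_tr.
  by have := col_base_full A; rewrite /row_full.
rewrite FFT CbT FX CbE !trmx_mul trmxK.
set H := X^T *m invmx (X *m X^T) *m (invmx (Z^T *m Z) *m Z^T).
have HC : H = invmx C.
  have e1 : forall p (Y : 'M_(p, _)), Y *m X *m X^T *m invmx (X *m X^T) = Y.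
    by move=> p Y; rewrite -(mulmxA Y) -(mulmxA Y) mulmxV // mulmx1.
  have e2 : forall p (Y : 'M_(p, _)), Y *m invmx (Z^T *m Z) *m Z^T *m Z = Y.
    move=> p Y; rewrite -(mulmxA (Y *m _)) -(mulmxA Y) mulVmx // mulmx1 //.
  have : C *m H *m C = C.
    by rewrite -{1}ZX -ZX /H !mulmxA e1 e2.
  move=> /(congr1 (mulmx (invmx C))); rewrite !mulmxA mulVmx // mul1mx.
  by move=> /(congr1 (mulmx^~ (invmx C))); rewrite mulmxK // mul1mx /H !mulmxA.
by rewrite -HC /H !mulmxA.
Qed.
End Real.

Section Roots.
Variable R : rcfType.

Lemma in_rootsR (p : {poly R}) x : p != 0 -> (x \in rootsR p) = root p x.
Proof. by move=> p0; rewrite -(roots_on_rootsR p0 x) in_itv. Qed.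

Lemma lm_lt (p : {poly R}) l : p != 0 -> l < head 0 (rootsR p) ->
  forall r, root p r -> l < r.
Proof.
move=> p0 hl r rr; rewrite -(in_rootsR _ p0) in rr.
have so : sorted <%R (rootsR p) by exact: sorted_roots.
move: hl rr so; case: (rootsR p) => [//|h s] /= hl.
rewrite inE => /orP [/eqP -> //|rs] so.
have := order_path_min lt_trans so => /allP /(_ r rs) hr.
exact: lt_trans hl hr.
Qed.

Lemma lm_gt (p : {poly R}) l : p != 0 -> (exists r, root p r) ->
  (forall r, root p r -> l < r) -> l < head 0 (rootsR p).
Proof.
move=> p0 [r rr] hr; rewrite -(in_rootsR _ p0) in rr.
have : head 0 (rootsR p) \in rootsR p by move: rr; case: (rootsR p) => //= h s _; rewrite inE eqxx.
by rewrite in_rootsR // => /hr.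
Qed.

Definition PD k (A : 'M[R]_k) := forall x : 'rV_k, x != 0 -> 0 < (x *m A *m x^T) 0 0.

Lemma PD_unit k (A : 'M[R]_k) : PD A -> A \in unitmx.
Proof.
move=> hA; rewrite -row_free_unit; apply: inj_row_free => y H.
apply/eqP/negPn/negP => y0; have := hA y y0; by rewrite H mul0mx mxE ltxx.
Qed.

Lemma root_gt k (N : 'M[R]_k) l : PD (N - l%:M) -> forall r, root (char_poly N) r -> l < r.
Proof.
move=> hN r; rewrite -eigenvalue_root_char => /eigenvalueP [x xN x0].
have := hN x x0; rewrite mulmxBr mul_mx_scalar xN -scalerBl -scalemxAl mxE.
by rewrite pmulr_lgt0 ?subr_gt0 // sqsum_gt0.
Qed.
End Roots.

From mathcomp Require Import ring lra.

Lemma arith (R : realFieldType) (t q1 q2 D : R) : 0 < t -> 0 <= q1 -> 0 <= q2 ->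
  1/t <= D^-1 * q2 - q1 -> 0 < q2 /\ D <= t * q2 / (1 + t * q1).
Proof.
move=> t0 q10 q20; rewrite lerBrDr => h.
have h0 : 0 < 1/t + q1 by rewrite ltr_wpDr // divr_gt0.
have h1 : 0 < D^-1 * q2 := lt_le_trans h0 h.
have Di : 0 < D^-1.
  rewrite ltNge; apply/negP => hD; move: h1; rewrite ltNge mulr_le0_ge0 //.
have q2p : 0 < q2.
  rewrite lt_def q20 andbT; apply/negP => /eqP q2e; move: h1; by rewrite q2e mulr0 ltxx.
have Dp : 0 < D by rewrite -invr_gt0.
split=> //; rewrite ler_pdivlMr; last by rewrite ltr_wpDr // mulr_ge0 // ltW.
have e : D * (1 + t * q1) = (t * D) * (1/t + q1).
  by field; rewrite gt_eqF.
rewrite e; have -> : t * q2 = (t * D) * (D^-1 * q2) by field; rewrite gt_eqF.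
exact: (ler_wpM2l (mulr_ge0 (ltW t0) (ltW Dp)) h).
Qed.

Lemma invmx_eq (R : comUnitRingType) k (A G : 'M[R]_k) : A *m G = 1%:M -> invmx A = G.
Proof.
move=> AG; have [Au _] := mulmx1_unit AG.
by rewrite -[invmx A]mulmx1 -AG mulmxA mulVmx // mul1mx.
Qed.

Lemma sm (R : fieldType) k (A : 'M[R]_k) (u : 'cV[R]_k) (t : R) :
  A \in unitmx -> 1 + t * (u^T *m invmx A *m u) 0 0 != 0 ->
  invmx (A + t *: (u *m u^T)) =
  invmx A - (t / (1 + t * (u^T *m invmx A *m u) 0 0)) *: (invmx A *m u *m u^T *m invmx A).
Proof.
move=> Au h; apply: invmx_eq.
set W := invmx A; set q := (u^T *m W *m u) 0 0.
set c := t / (1 + t * q).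
have hq : u^T *m W *m u = q%:M by rewrite [LHS]mx11_scalar.
set P := u *m u^T *m W.
have e1 : A *m W = 1%:M by rewrite mulmxV.
have e2 : A *m (W *m u *m u^T *m W) = P by rewrite !mulmxA e1 mul1mx.
have e3 : (u *m u^T) *m (W *m u *m u^T *m W) = q *: P.
  have e4 : u *m u^T *m W *m u = q *: u.
    by rewrite -(mulmxA (u *m u^T)) -(mulmxA u) (mulmxA u^T) hq mul_mx_scalar.
  by rewrite !mulmxA e4 /P -!scalemxAl.
rewrite mulmxDl !mulmxBr e1 -scalemxAr e2 -!scalemxAl -!scalemxAr e3 -/P scalerA.
have -> : t *: P - t * c *: (q *: P) = (t - t * c * q) *: P by rewrite scalerA scalerBl.
rewrite -addrA -scaleNr -scalerDl.
have -> : - c + (t - t * c * q) = 0.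
  by rewrite /c; field.
by rewrite scale0r addr0.
Qed.

Lemma tr_quad (R : comNzRingType) n (A : 'M[R]_n) (v : 'cV[R]_n) :
  \tr (A^T *m (v *m v^T)) = (v^T *m A *m v) 0 0.
Proof.
rewrite mulmxA mxtrace_mulC trace_mx11 mulmxA.
have -> : v^T *m A^T *m v = (v^T *m A *m v)^T by rewrite !trmx_mul trmxK mulmxA.
by rewrite mxE.
Qed.

Unset Implicit Arguments.

Theorem lemma3p11 (R : rcfType) (n k : nat) (U : 'M[R]_(k, n))
  (B : 'M[R]_n) (l dL t : R) (v : 'cV[R]_n) :
  U *m U^T = 1%:M ->
  B^T = B ->
  0 < dL -> 0 < t ->
  l + dL < lambda_min (restr U B) ->
  1 / t <= frobdot (LB U B l dL) (v *m v^T) ->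
  Phi U (B + t *: (v *m v^T)) (l + dL) <= Phi U B l /\
  l + dL < lambda_min (restr U (B + t *: (v *m v^T))).
Proof.
move=> UU Bsym dL0 t0 hlam hL.
have shiftE : forall (B' : 'M_n) c, shiftS U B' c = U^T *m (restr U B' - c%:M) *m U.
  move=> B' c.
  have <- : U *m (B' - c%:M) *m U^T = restr U B' - c%:M.
    by rewrite mulmxBr mulmxBl mul_mx_scalar -scalemxAl UU scalemx1.
  by rewrite /shiftS /projS !mulmxA.
have PhiE : forall B' c, restr U B' - c%:M \in unitmx ->
    Phi U B' c = \tr (invmx (restr U B' - c%:M)).
  move=> B' c hu; rewrite /Phi shiftE pinv_compress // mxtrace_mulC mulmxA UU.
  by rewrite mul1mx.
set Mb := restr U B.
have Mbsym : Mb^T = Mb by rewrite /Mb /restr !trmx_mul trmxK Bsym mulmxA.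
set u := U *m v.
have rB2 : restr U (B + t *: (v *m v^T)) = Mb + t *: (u *m u^T).
  by rewrite /restr /Mb mulmxDr mulmxDl -scalemxAr -scalemxAl /u trmx_mul !mulmxA.
set l' := l + dL.
have hroots := lm_lt (monic_neq0 (char_poly_monic Mb)) hlam.
have PD' : PD (Mb - l'%:M) := spec_pd Mbsym hroots.
have PDl : PD (Mb - l%:M).
  apply: (spec_pd Mbsym) => r hr; apply: lt_trans (hroots r hr).
  by rewrite /l' ltrDl.
have U' := PD_unit PD'; have Ul := PD_unit PDl.
set W := invmx (Mb - l'%:M).
have Wsym : W^T = W by rewrite /W trmx_inv linearB /= tr_scalar_mx Mbsym.
set q1 := (u^T *m W *m u) 0 0.
set q2 := (u^T *m W *m W *m u) 0 0.
set D := Phi U B l' - Phi U B l.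
have hF : frobdot (LB U B l dL) (v *m v^T) = D^-1 * q2 - q1.
  rewrite /frobdot tr_quad /LB -/l' -/D shiftE pinv_compress // -/Mb -/W.
  rewrite mulmxBr mulmxBl -scalemxAr -scalemxAl.
  have -> : v^T *m (U^T *m W *m U *m (U^T *m W *m U)) *m v = u^T *m W *m W *m u.
    by rewrite /u trmx_mul !mulmxA -(mulmxA _ U U^T) UU mulmx1.
  have -> : v^T *m (U^T *m W *m U) *m v = u^T *m W *m u.
    by rewrite /u trmx_mul !mulmxA.
  by rewrite /q1 /q2 !mxE.
rewrite hF in hL.
set r := u^T *m W.
have q1E : q1 = (r *m (Mb - l'%:M) *m r^T) 0 0.
  by rewrite /r (trmx_mul u^T W) Wsym trmxK -(mulmxA _ (_ - _)) (mulmxA (_ - _)) mulmxV // mul1mx.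
have q2E : q2 = (r *m r^T) 0 0.
  by rewrite /r (trmx_mul u^T W) Wsym trmxK mulmxA.
have q1p : 0 <= q1.
  rewrite q1E; have [->|r0] := eqVneq r 0; first by rewrite !mul0mx mxE.
  by rewrite ltW // PD'.
have q2p : 0 <= q2 by rewrite q2E sqsum_ge0.
have [q2pos hD] := arith t0 q1p q2p hL.
set N := Mb + t *: (u *m u^T).
have PDN : PD (N - l'%:M).
  move=> x x0; rewrite /N addrAC mulmxDr mulmxDl mxE.
  apply: ltr_wpDr; last exact: PD'.
  rewrite -scalemxAr -scalemxAl mxE; apply: mulr_ge0; first exact: ltW.
  by rewrite mulmxA -(mulmxA (x *m u)) -trmx_mul sqsum_ge0.
have hN : N - l'%:M = (Mb - l'%:M) + t *: (u *m u^T) by rewrite /N addrAC.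
have Nsym : N^T = N.
  by rewrite /N linearD /= Mbsym linearZ /= trmx_mul trmxK.
split.
  have h1 : 1 + t * q1 != 0 by rewrite gt_eqF // ltr_wpDr // mulr_ge0 // ltW.
  rewrite (PhiE _ l'); last by rewrite rB2 -/N PD_unit.
  rewrite rB2 -/N hN sm // -/W -/q1.
  rewrite linearB /= mxtraceZ -(mulmxA (W *m u)) mxtrace_mulC (mulmxA (u^T *m W) W u).
  rewrite trace_mx11 -/q2.
  have PhiW : Phi U B l' = \tr W by rewrite PhiE.
  have -> : Phi U B l = \tr W - D by rewrite /D PhiW; lra.
  by apply: lerB => //; move: hD; rewrite mulrAC.
rewrite rB2 -/N /lambda_min.
apply: lm_gt; first exact: monic_neq0 (char_poly_monic N).
  have kpos : (0 < k)%N.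
    rewrite lt0n; apply/eqP => k0; move: q2pos; rewrite q2E mxE big1 ?ltxx // => j _.
    by have := leq_trans (ltn_ord j) (eq_leq k0).
  by eexists; apply: (d_root Nsym (Ordinal kpos)).
exact: root_gt PDN.
Qed.
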